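(* Let $\mathcal{X}$ be a Hilbert module over a pro-$C^*$-algebra $\mathcal{A}$, let $K\in Hom^*_{\mathcal{A}}(\mathcal{X})$, let $\{\xi_i\}_{i\in I}$ be a $K$-frame for $\mathcal{X}$, and let $T\in Hom^*_{\mathcal{A}}(\mathcal{X})$ be uniformly bounded and a co-isometry (i.e. $TT^*=I$) with $TK=KT$. Then $\{T\xi_i\}_{i\in I}$ is a $K$-frame for $\mathcal{X}$.
   Context: A pro-$C^*$-algebra $\mathcal{A}$ is a complete Hausdorff topological $*$-algebra whose topology is given by its continuous $C^*$-seminorms $S(\mathcal{A})$. A Hilbert $\mathcal{A}$-module $\mathcal{X}$ is a left $\mathcal{A}$-module with an $\mathcal{A}$-valued inner product, complete for $\bar p_{\mathcal{X}}(\xi)=\sqrt{p(\langle\xi,\xi\rangle)}$. $Hom^*_{\mathcal{A}}(\mathcal{X})$ denotes adjointable bounded $\mathcal{A}$-module maps; $T$ is uniformly bounded if there is a single $C>0$ with $\bar p_{\mathcal{X}}(T\xi)\le C\bar p_{\mathcal{X}}(\xi)$ for all $p,\xi$. A sequence $\{\xi_i\}_{i\in I}$ ($I$ countable) is a $K$-frame for $\mathcal{X}$ if $\sum_i\langle\xi,\xi_i\rangle\langle\xi_i,\xi\rangle$ converges in $\mathcal{A}$ and there are $A,B>0$ with $A\langle K^*\xi,K^*\xi\rangle\le\sum_i\langle\xi,\xi_i\rangle\langle\xi_i,\xi\rangle\le B\langle\xi,\xi\rangle$ for all $\xi\in\mathcal{X}$. *)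

(* Defs.v *)
From HB Require Import structures.
From mathcomp Require Import all_boot all_order all_algebra.
From mathcomp Require Import boolp classical_sets filter reals.
From mathcomp Require Import finmap.
From mathcomp Require Import complex.

Set Implicit Arguments.
Unset Strict Implicit.
Unset Printing Implicit Defensive.

Import Order.TTheory GRing.Theory Num.Theory.
Local Open Scope ring_scope.

Section ProCStar.
Variable R : realType.
Local Notation C := R[i].

Record star_alg (A : lmodType C) := StarAlg {
  amul : A -> A -> A;
  astar : A -> A;
  amulA : forall a b c, amul a (amul b c) = amul (amul a b) c;
  amulDl : forall a b c, amul (a + b) c = amul a c + amul b c;
  amulDr : forall a b c, amul a (b + c) = amul a b + amul a c;
  amulZl : forall (z : C) a b, amul (z *: a) b = z *: amul a b;
  amulZr : forall (z : C) a b, amul a (z *: b) = z *: amul a b;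
  astarK : forall a, astar (astar a) = a;
  astarD : forall a b, astar (a + b) = astar a + astar b;
  astarZ : forall (z : C) a, astar (z *: a) = (conjc z) *: astar a;
  astarM : forall a b, astar (amul a b) = amul (astar b) (astar a)
}.

Definition cstar_seminorm (A : lmodType C) (SA : star_alg A) (p : A -> R) :=
  [/\ forall a, 0 <= p a,
      forall a b, p (a + b) <= p a + p b,
      forall (z : C) a, p (z *: a) = Normc.normc z * p a,
      forall a b, p (amul SA a b) <= p a * p b
    & forall a, p (amul SA (astar SA a) a) = p a ^+ 2].

(* A seminorm q is continuous for the locally convex topology generated by
   the family S iff it is dominated by a multiple of a finite sum of
   members of S. *)
Definition continuous_wrt (A : lmodType C) (S : set (A -> R)) (q : A -> R) :=
  exists (ps : seq (A -> R)) (c : R),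
    (forall p, p \in ps -> S p) /\
    (forall a, q a <= c * \sum_(p <- ps) p a).

Definition seminorm_complete (X : lmodType C) (N : set (X -> R)) :=
  forall F : set_system X, ProperFilter F ->
    (forall n, N n -> forall e : R, 0 < e ->
        exists2 U, F U & forall x y, U x -> U y -> n (x - y) < e) ->
    exists l : X, forall n, N n -> forall e : R, 0 < e ->
        F (fun x => n (x - l) < e).

(* A pro-C*-algebra: a complete Hausdorff topological *-algebra whose
   topology is given by the family [sn] of its continuous C*-seminorms. *)
Record pro_cstar (A : lmodType C) := ProCStar {
  pc_alg :> star_alg A;
  sn : set (A -> R);
  sn_cstar : forall p, sn p -> cstar_seminorm pc_alg p;
  sn_all : forall q, cstar_seminorm pc_alg q -> continuous_wrt sn q -> sn q;
  sn_hausdorff : forall a, (forall p, sn p -> p a = 0) -> a = 0;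
  sn_complete : seminorm_complete sn
}.

Section Order.
Variables (A : lmodType C) (PA : pro_cstar A).

Definition apos (a : A) := exists b : A, a = amul PA (astar PA b) b.
Definition ale (a b : A) := apos (b - a).

Definition has_sum (I : countType) (f : I -> A) (s : A) :=
  forall p, sn PA p -> forall e : R, 0 < e ->
    exists F0 : {fset I}, forall F : {fset I}, fsubset F0 F ->
      p (\sum_(i <- F) f i - s) < e.

End Order.

Record hilbert_module (A : lmodType C) (PA : pro_cstar A) (X : lmodType C) :=
  HilbMod {
  act : A -> X -> X;
  ip : X -> X -> A;
  actA : forall a b x, act (amul PA a b) x = act a (act b x);
  actDl : forall a b x, act (a + b) x = act a x + act b x;
  actDr : forall a x y, act a (x + y) = act a x + act a y;
  actZl : forall (z : C) a x, act (z *: a) x = z *: act a x;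
  actZr : forall (z : C) a x, act a (z *: x) = z *: act a x;
  ipDl : forall x y w, ip (x + y) w = ip x w + ip y w;
  ipZl : forall (z : C) x y, ip (z *: x) y = z *: ip x y;
  ipAl : forall a x y, ip (act a x) y = amul PA a (ip x y);
  ip_star : forall x y, astar PA (ip x y) = ip y x;
  ip_pos : forall x, apos PA (ip x x);
  ip_def : forall x, ip x x = 0 -> x = 0;
  hm_complete :
    seminorm_complete [set n | exists2 p, sn PA p & n = fun x => Num.sqrt (p (ip x x))]
}.

Section Operators.
Variables (A : lmodType C) (PA : pro_cstar A) (X : lmodType C)
          (HX : hilbert_module PA X).

Definition nX (p : A -> R) (x : X) : R := Num.sqrt (p (ip HX x x)).

Definition adjoint (T Ts : X -> X) := forall x y, ip HX (T x) y = ip HX x (Ts y).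

Definition hom_star (T : X -> X) :=
  [/\ forall x y, T (x + y) = T x + T y,
      forall (z : C) x, T (z *: x) = z *: T x,
      forall a x, T (act HX a x) = act HX a (T x),
      (forall p, sn PA p -> exists2 c : R, 0 <= c & forall x, nX p (T x) <= c * nX p x)
    & exists Ts, adjoint T Ts].

Definition unif_bounded (T : X -> X) :=
  exists2 c : R, 0 < c & forall p, sn PA p -> forall x, nX p (T x) <= c * nX p x.

(* K-frame, where Ks is the adjoint K^* of K *)
Definition K_frame (I : countType) (Ks : X -> X) (xi : I -> X) :=
  (forall x, exists s, has_sum PA (fun i => amul PA (ip HX x (xi i)) (ip HX (xi i) x)) s) /\
  exists (a b : R), [/\ 0 < a, 0 < b &
    forall x s, has_sum PA (fun i => amul PA (ip HX x (xi i)) (ip HX (xi i) x)) s ->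
      ale PA ((a%:C)%C *: ip HX (Ks x) (Ks x)) s /\ ale PA s ((b%:C)%C *: ip HX x x)].

End Operators.
End ProCStar.

(* Main.v *)
Require Import Defs.
From HB Require Import structures.
From mathcomp Require Import all_boot all_order all_algebra.
From mathcomp Require Import boolp classical_sets filter reals.
From mathcomp Require Import finmap.
From mathcomp Require Import complex.
Import GRing.Theory Num.Theory.
Local Open Scope ring_scope.

Theorem theorem4p13 (R : realType) (A : lmodType R[i]) (PA : pro_cstar A)
    (X : lmodType R[i]) (HX : hilbert_module PA X)
    (K Ks : X -> X) (hK : hom_star HX K) (hKs : adjoint HX K Ks)
    (I : countType) (xi : I -> X) (hxi : K_frame HX Ks xi)
    (T Ts : X -> X) (hT : hom_star HX T) (hTs : adjoint HX T Ts)
    (hTu : unif_bounded HX T) (hco : forall x, T (Ts x) = x)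
    (hTK : forall x, T (K x) = K (T x)) :
  K_frame HX Ks (fun i => T (xi i)).
Proof.
have L1 : forall u y, ip HX u (T y) = ip HX (Ts u) y.
  move=> u y; rewrite -ip_star hTs ip_star //.
have L2 : forall w, ip HX (Ts w) (Ts w) = ip HX w w.
  by move=> w; rewrite -hTs hco.
have ipN : forall z u, ip HX (- z) u = - ip HX z u.
  move=> z u; rewrite -scaleN1r ipZl scaleN1r //.
have L3 : forall y, Ks (Ts y) = Ts (Ks y).
  move=> y.
  have H : forall u, ip HX (Ks (Ts y)) u = ip HX (Ts (Ks y)) u.
    move=> u; rewrite -ip_star -[RHS]ip_star; congr (astar _ _).
    by rewrite -hKs -hTs hTK hKs -hTs.
  apply/eqP; rewrite -subr_eq0; apply/eqP; apply: (ip_def (h := HX)).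
  by rewrite ipDl ipN H subrr.
have F : forall x, (fun i => amul PA (ip HX x (T (xi i))) (ip HX (T (xi i)) x))
   = (fun i => amul PA (ip HX (Ts x) (xi i)) (ip HX (xi i) (Ts x))).
  move=> x; apply: funext => i /=; by rewrite L1 hTs.
case: hxi => [hc [a [b [a0 b0 hab]]]].
split.
  move=> x. rewrite F. exact: (hc (Ts x)).
exists a, b; split => // x s hs. Show.
rewrite F in hs. Show.
have [h1 h2] := hab _ _ hs.
rewrite L3 L2 in h1. by rewrite L2 in h2.
Qed.
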